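(* Let $\{X_n\}$ be the Bessel-like walk of the context. There exists a constant $K_2>0$ (depending only on the transition probabilities) such that for all integers $h\ge1$, $m\ge 2h^2$ and $0<q<h$, \[ P_q\big(X_n\in(0,h)\text{ for all } n\le m\big)\le e^{-K_2m/h^2}. \]
   Context: Let $\{X_n\}_{n\ge0}$ be a Markov chain on $\mathbb{Z}_+=\{0,1,2,\dots\}$ with steps $\pm1$, reflecting at $0$, and for $x\ge1$ transition probabilities $p_x=p(x,x+1)$, $q_x=p(x,x-1)=1-p_x$. A drift parameter $\delta\ge-1$ is fixed and $R_x$ is defined by $p_x=\frac12\left(1-\frac{\delta}{2x}+\frac{R_x}{2}\right)$, where $R_x=o(1/x)$ as $x\to\infty$. Uniform ellipticity: there is $\epsilon>0$ with $p_x,q_x\in[\epsilon,1-\epsilon]$ for all $x\ge1$. The walk is assumed recurrent (for $\delta>-1$ this is automatic). $P_q$ denotes the law of the chain started at $q$. *)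

(* Defs.v *)
From Stdlib Require Import Reals Lra Lia.
From Coquelicot Require Import Coquelicot.
Open Scope R_scope.

(* Nearest-neighbour walk on Z_+ : p x = p(x,x+1), 1 - p x = p(x,x-1) for x >= 1;
   reflecting at 0 (p(0,1) = 1).  The value [p 0] is irrelevant. *)

(* R_x defined from p_x = 1/2 (1 - delta/(2x) + R_x/2). *)
Definition Rterm (p : nat -> R) (delta : R) (x : nat) : R :=
  2 * (2 * p x - 1 + delta / (2 * INR x)).

Definition unif_elliptic (p : nat -> R) : Prop :=
  exists eps : R, 0 < eps /\
    forall x : nat, (1 <= x)%nat -> eps <= p x <= 1 - eps /\ eps <= 1 - p x <= 1 - eps.

(* hit p n x = P_x(the chain hits 0 within n steps). *)
Fixpoint hit (p : nat -> R) (n x : nat) : R :=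
  match x with
  | O => 1
  | S _ => match n with
           | O => 0
           | S n' => p x * hit p n' (S x) + (1 - p x) * hit p n' (pred x)
           end
  end.

(* Recurrence: started from 0 the chain moves to 1 and returns to 0 with
   probability one, i.e. P_1(hit 0 eventually) = lim_n P_1(hit 0 within n) = 1. *)
Definition recurrent (p : nat -> R) : Prop :=
  is_lim_seq (fun n => hit p n 1%nat) 1.

Definition in_open (h x : nat) : bool := Nat.ltb 0 x && Nat.ltb x h.

(* stay p h m x = P_x(X_n in (0,h) for all n = 0..m), computed by the
   Markov property (sum over paths of the products of transition probabilities). *)
Fixpoint stay (p : nat -> R) (h m x : nat) : R :=
  match m with
  | O => if in_open h x then 1 else 0
  | S m' => if in_open h x
            then p x * stay p h m' (S x) + (1 - p x) * stay p h m' (pred x)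
            else 0
  end.

(* Main.v *)
Require Import Defs.
From Stdlib Require Import Reals Lra Lia.
From Coquelicot Require Import Coquelicot.
Open Scope R_scope.

Lemma in_open_true h x : in_open h x = true -> (0 < x)%nat /\ (x < h)%nat.
Proof. unfold in_open; rewrite Bool.andb_true_iff, !Nat.ltb_lt; auto. Qed.

Lemma stay_out p h m x : in_open h x = false -> stay p h m x = 0.
Proof. intros H; destruct m; simpl; rewrite H; auto. Qed.

Lemma INR_pred x : (1 <= x)%nat -> INR (pred x) = INR x - 1.
Proof. intros H; destruct x; [lia|]; simpl pred; rewrite S_INR; ring. Qed.

Lemma conv01 t a b : 0 <= t <= 1 -> 0 <= a <= 1 -> 0 <= b <= 1 ->
  0 <= t * a + (1 - t) * b <= 1.
Proof. intros; nra. Qed.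

Section S.
Variable p : nat -> R.
Hypothesis Hr : forall x : nat, (1 <= x)%nat -> 0 <= p x <= 1.

Lemma stay_bounds h : forall m x, 0 <= stay p h m x <= 1.
Proof.
  induction m; intros x; simpl; destruct (in_open h x) eqn:E; try lra.
  apply in_open_true in E. apply conv01; auto. apply Hr; lia.
Qed.

Lemma stay_submult h M b : (forall y, stay p h b y <= M) ->
  forall a x, stay p h (a + b) x <= M * stay p h a x.
Proof.
  intros HM a; induction a; intros x.
  - simpl. destruct (in_open h x) eqn:E.
    + rewrite Rmult_1_r; auto.
    + rewrite stay_out by auto; lra.
  - simpl. destruct (in_open h x) eqn:E; [|lra].
    apply in_open_true in E. assert (Hp := Hr x ltac:(lia)).
    assert (A1 : p x * stay p h (a + b) (S x) <= p x * (M * stay p h a (S x)))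
      by (apply Rmult_le_compat_l; [lra| apply IHa]).
    assert (A2 : (1 - p x) * stay p h (a + b) (pred x) <= (1 - p x) * (M * stay p h a (pred x)))
      by (apply Rmult_le_compat_l; [lra| apply IHa]).
    lra.
Qed.

Lemma pow_le1 e k : 0 <= e <= 1 -> 0 <= e ^ k <= 1.
Proof. intros H; induction k; simpl; nra. Qed.

Lemma pow_decr e a b : 0 <= e <= 1 -> (a <= b)%nat -> e ^ b <= e ^ a.
Proof.
  intros He Hab. replace b with (a + (b - a))%nat by lia. rewrite pow_add.
  pose proof (pow_le1 e a He). pose proof (pow_le1 e (b - a) He). nra.
Qed.

Lemma stay_elliptic h eps : 0 < eps <= 1 -> (forall x, (1 <= x)%nat -> eps <= p x) ->
  forall n x, (h <= x + n)%nat -> stay p h n x <= 1 - eps ^ (h - x).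
Proof.
  intros He Hp n; induction n; intros x Hx.
  - simpl. unfold in_open. replace (x <? h)%nat with false by (symmetry; apply Nat.ltb_ge; lia).
    rewrite Bool.andb_false_r. replace (h - x)%nat with 0%nat by lia. simpl; lra.
  - simpl. destruct (in_open h x) eqn:E.
    + apply in_open_true in E.
      assert (I1 := IHn (S x) ltac:(lia)).
      assert (I2 := proj2 (stay_bounds h n (pred x))).
      assert (P1 := Hp x ltac:(lia)). assert (P2 := Hr x ltac:(lia)).
      replace (h - x)%nat with (S (h - S x)) by lia. simpl.
      pose proof (pow_le1 eps (h - S x) ltac:(lra)).
      assert (A1 : p x * stay p h n (S x) <= p x * (1 - eps ^ (h - S x)))
        by (apply Rmult_le_compat_l; lra).
      assert (A2 : (1 - p x) * stay p h n (pred x) <= (1 - p x))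
        by (rewrite <- (Rmult_1_r (1 - p x)) at 2; apply Rmult_le_compat_l; lra).
      nra.
    + pose proof (pow_le1 eps (h - x) ltac:(lra)). lra.
Qed.

Lemma lyap h (g : nat -> R) :
  (forall x, (x <= h)%nat -> 0 <= g x) ->
  (forall x, in_open h x = true -> 1 + p x * g (S x) + (1 - p x) * g (pred x) <= g x) ->
  forall N x, (x <= h)%nat -> INR (S N) * stay p h N x <= g x.
Proof.
  intros Hg HL N; induction N; intros x Hx.
  - simpl. destruct (in_open h x) eqn:E.
    + pose proof (HL x E) as HH. apply in_open_true in E.
      assert (Hp := Hr x ltac:(lia)).
      assert (G1 := Hg (S x) ltac:(lia)). assert (G2 := Hg (pred x) ltac:(lia)).
      nra.
    + rewrite Rmult_0_r; auto.
  - rewrite S_INR. simpl stay. destruct (in_open h x) eqn:E.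
    + pose proof (HL x E) as HH. apply in_open_true in E.
      assert (Hp := Hr x ltac:(lia)).
      assert (I1 := IHN (S x) ltac:(lia)). assert (I2 := IHN (pred x) ltac:(lia)).
      assert (B1 := stay_bounds h N (S x)). assert (B2 := stay_bounds h N (pred x)).
      assert (B := conv01 (p x) _ _ Hp B1 B2).
      assert (A1 : p x * (INR (S N) * stay p h N (S x)) <= p x * g (S x))
        by (apply Rmult_le_compat_l; lra).
      assert (A2 : (1 - p x) * (INR (S N) * stay p h N (pred x)) <= (1 - p x) * g (pred x))
        by (apply Rmult_le_compat_l; lra).
      nra.
    + rewrite Rmult_0_r; auto.
Qed.
End S.

Fixpoint psi (b : R) (x0 k : nat) : R :=
  match k with O => 0 | S k' => psi b x0 k' + (b ^ (x0 + 1 - S k') - 1) end.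

Lemma psi_nonneg b x0 k : 1 <= b -> 0 <= psi b x0 k.
Proof. intros Hb; induction k; simpl; [lra|]. pose proof (pow_R1_Rle b (x0 + 1 - S k) Hb). lra. Qed.

Lemma psi_le b x0 k : 1 <= b -> psi b x0 k <= INR (Nat.min k x0) * b ^ x0.
Proof.
  intros Hb; induction k; cbn [psi]; [simpl; lra|].
  destruct (Compare_dec.le_lt_dec (S k) x0).
  - rewrite (Nat.min_l (S k) x0) by lia. rewrite (Nat.min_l k x0) in IHk by lia.
    rewrite S_INR. pose proof (Rle_pow b (x0 + 1 - S k) x0 Hb ltac:(lia)). lra.
  - rewrite (Nat.min_r (S k) x0) by lia. rewrite (Nat.min_r k x0) in IHk by lia.
    replace (x0 + 1 - S k)%nat with 0%nat by lia. simpl. lra.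
Qed.

Lemma psi_bound b x0 k : 1 <= b -> psi b x0 k <= INR x0 * b ^ x0.
Proof.
  intros Hb. eapply Rle_trans; [apply psi_le; auto|].
  apply Rmult_le_compat_r. pose proof (pow_R1_Rle b x0 Hb); lra.
  apply le_INR; lia.
Qed.

Lemma psi_drift_hi b x0 pp x : (x0 < x)%nat ->
  pp * psi b x0 (S x) + (1 - pp) * psi b x0 (pred x) - psi b x0 x = 0.
Proof.
  intros H. destruct x; [lia|]. simpl pred.
  change (psi b x0 (S (S x))) with (psi b x0 (S x) + (b ^ (x0 + 1 - S (S x)) - 1)).
  change (psi b x0 (S x)) with (psi b x0 x + (b ^ (x0 + 1 - S x) - 1)).
  replace (x0 + 1 - S (S x))%nat with 0%nat by lia.
  replace (x0 + 1 - S x)%nat with 0%nat by lia. simpl. ring.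
Qed.

Lemma psi_drift_lo b x0 eps pp x : 0 < eps <= 1 -> eps * b = 2 -> 1 <= b ->
  pp <= 1 -> eps <= 1 - pp -> (1 <= x)%nat -> (x <= x0)%nat ->
  pp * psi b x0 (S x) + (1 - pp) * psi b x0 (pred x) - psi b x0 x <= -1.
Proof.
  intros He Heb Hb Hp1 Hp2 H1 H2. destruct x; [lia|]. simpl pred.
  change (psi b x0 (S (S x))) with (psi b x0 (S x) + (b ^ (x0 + 1 - S (S x)) - 1)).
  change (psi b x0 (S x)) with (psi b x0 x + (b ^ (x0 + 1 - S x) - 1)).
  replace (x0 + 1 - S x)%nat with (S (x0 + 1 - S (S x))) by lia.
  set (j := (x0 + 1 - S (S x))%nat). simpl pow.
  pose proof (pow_R1_Rle b j Hb) as Bj.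
  set (c := b ^ j) in *.
  assert (A1 : pp * (c - 1) <= 1 * (c - 1)) by (apply Rmult_le_compat_r; lra).
  assert (A2 : eps * (b * c - 1) <= (1 - pp) * (b * c - 1)) by (apply Rmult_le_compat_r; nra).
  assert (A3 : eps * (b * c - 1) = (eps * b) * c - eps) by ring.
  rewrite Heb in A3.
  replace (pp * (psi b x0 x + (b * c - 1) + (c - 1)) + (1 - pp) * psi b x0 x -
   (psi b x0 x + (b * c - 1))) with (pp * (c - 1) - (1 - pp) * (b * c - 1)) by ring.
  lra.
Qed.

Lemma numeric H B0 M : 0 <= M -> 0 <= B0 -> 12 * M + 6 * B0 * M + 1 <= H ->
  (4/3 * H ^ 2 + (2 * H + B0) * M) / (2 * H ^ 2 + 1) <= 5/6.
Proof.
  intros HM HB HH.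
  assert (0 < 2 * H ^ 2 + 1) by nra.
  apply Rmult_le_reg_r with (2 * H ^ 2 + 1); auto.
  unfold Rdiv; rewrite Rmult_assoc, Rinv_l by lra.
  assert (0 <= H * (H - 12 * M)) by (apply Rmult_le_pos; nra).
  assert (2 * H * M <= H ^ 2 / 6) by nra.
  assert (0 <= B0 * M) by (apply Rmult_le_pos; lra).
  assert (H <= H ^ 2) by nra.
  assert (B0 * M <= H ^ 2 / 6) by nra.
  nra.
Qed.

Section S3.
Variable p : nat -> R.
Hypothesis Hr : forall x : nat, (1 <= x)%nat -> 0 <= p x <= 1.

Lemma large_case h (N : nat) (eps B0 : R) (g0 : nat -> R) :
  0 < eps <= 1/2 -> (forall x, (1 <= x)%nat -> eps <= 1 - p x) -> 0 <= B0 ->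
  (forall x, (x <= h)%nat -> 0 <= g0 x <= 4/3 * INR h ^ 2) ->
  (forall x, in_open h x = true -> (S N <= x)%nat ->
      1 + p x * g0 (S x) + (1 - p x) * g0 (pred x) - g0 x <= 0) ->
  (forall x, in_open h x = true -> (x <= N)%nat ->
      1 + p x * g0 (S x) + (1 - p x) * g0 (pred x) - g0 x <= 2 * INR h + B0) ->
  forall x, stay p h (2*h*h) x <=
     (4/3 * INR h ^ 2 + (2 * INR h + B0) * (INR N * (2/eps) ^ N)) / (2 * INR h ^ 2 + 1).
Proof.
  intros He Hq HB Hg0 Hhi Hlo x.
  set (b := 2 / eps).
  assert (Hb : 1 <= b) by (unfold b; apply Rmult_le_reg_r with eps; [lra|];
    unfold Rdiv; rewrite Rmult_assoc, Rinv_l by lra; lra).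
  assert (Heb : eps * b = 2) by (unfold b; field; lra).
  set (C := 2 * INR h + B0).
  assert (HC : 0 <= C) by (unfold C; pose proof (pos_INR h); lra).
  set (g := fun y => g0 y + C * psi b N y).
  assert (Hpos : 0 < 2 * INR h ^ 2 + 1) by (pose proof (pos_INR h); nra).
  destruct (Nat.le_gt_cases x h) as [Hx|Hx].
  2:{ rewrite stay_out. apply Rmult_le_pos; [|apply Rlt_le, Rinv_0_lt_compat; lra].
      pose proof (pos_INR h). pose proof (pos_INR N). pose proof (pow_R1_Rle b N Hb).
      apply Rplus_le_le_0_compat; [nra|]. apply Rmult_le_pos; [lra|]. nra.
      unfold in_open. replace (x <? h)%nat with false by (symmetry; apply Nat.ltb_ge; lia).
      apply Bool.andb_false_r. }
  assert (L := lyap p Hr h g).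
  assert (Hgn : forall y, (y <= h)%nat -> 0 <= g y).
  { intros y Hy. unfold g. pose proof (Hg0 y Hy). pose proof (psi_nonneg b N y Hb).
    pose proof (Rmult_le_pos _ _ HC H0). lra. }
  assert (HL : forall y, in_open h y = true -> 1 + p y * g (S y) + (1 - p y) * g (pred y) <= g y).
  { intros y Hy. unfold g.
    assert (E : 1 + p y * (g0 (S y) + C * psi b N (S y)) + (1 - p y) * (g0 (pred y) + C * psi b N (pred y))
        - (g0 y + C * psi b N y) =
        (1 + p y * g0 (S y) + (1 - p y) * g0 (pred y) - g0 y) +
        C * (p y * psi b N (S y) + (1 - p y) * psi b N (pred y) - psi b N y)) by ring.
    assert (Hy' := in_open_true _ _ Hy).
    destruct (Nat.le_gt_cases y N) as [HyN|HyN].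
    - pose proof (Hlo y Hy HyN).
      pose proof (psi_drift_lo b N eps (p y) y ltac:(lra) Heb Hb
           ltac:(apply Hr; lia) ltac:(apply Hq; lia) ltac:(lia) HyN) as D.
      assert (C * (p y * psi b N (S y) + (1 - p y) * psi b N (pred y) - psi b N y) <= C * -1)
        by (apply Rmult_le_compat_l; auto).
      fold C in H. lra.
    - pose proof (Hhi y Hy HyN).
      rewrite (psi_drift_hi b N (p y) y HyN) in E. lra. }
  specialize (L Hgn HL (2*h*h)%nat x Hx).
  assert (Hg : g x <= 4/3 * INR h ^ 2 + C * (INR N * b ^ N)).
  { unfold g. pose proof (Hg0 x Hx). pose proof (psi_bound b N x Hb).
    pose proof (Rmult_le_compat_l C _ _ HC H0). lra. }
  replace (INR (S (2 * h * h))) with (2 * INR h ^ 2 + 1) in L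
    by (rewrite S_INR, !mult_INR; simpl; ring).
  apply Rmult_le_reg_l with (2 * INR h ^ 2 + 1); auto.
  unfold Rdiv. rewrite (Rmult_comm (_ + C * _)), <- Rmult_assoc, Rinv_r, Rmult_1_l by lra.
  lra.
Qed.
End S3.

Lemma Rterm_id p delta x : (1 <= x)%nat ->
  INR x * Rterm p delta x = 2 * INR x * (2 * p x - 1) + delta.
Proof.
  intros H. assert (0 < INR x) by (apply lt_0_INR; lia).
  unfold Rterm. field. lra.
Qed.

Lemma g0_exists p delta
  (Hr : forall x : nat, (1 <= x)%nat -> 0 <= p x <= 1)
  (HR : is_lim_seq (fun n : nat => INR (S n) * Rterm p delta (S n)) 0) :
  exists N B0, 0 <= B0 /\ forall h, exists g0 : nat -> R,
  (forall x, (x <= h)%nat -> 0 <= g0 x <= 4/3 * INR h ^ 2) /\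
  (forall x, in_open h x = true -> (S N <= x)%nat ->
      1 + p x * g0 (S x) + (1 - p x) * g0 (pred x) - g0 x <= 0) /\
  (forall x, in_open h x = true -> (x <= N)%nat ->
      1 + p x * g0 (S x) + (1 - p x) * g0 (pred x) - g0 x <= 2 * INR h + B0).
Proof.
  apply is_lim_seq_spec in HR.
  destruct (Rle_dec delta 0) as [Hd|Hd].
  - destruct (HR (mkposreal (1/4) ltac:(lra))) as [N HN0].
    assert (HN : forall n, (N <= n)%nat -> Rabs (INR (S n) * Rterm p delta (S n) - 0) < 1/4)
      by (intros n Hn; exact (HN0 n Hn)).
    exists N, (3 * INR N). split. pose proof (pos_INR N); lra.
    intros h. exists (fun x => 4/3 * (INR h ^ 2 - INR x ^ 2)).
    split; [|split].
    + intros x Hx. pose proof (le_INR _ _ Hx). pose proof (pos_INR x). nra.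
    + intros x Hx HxN. apply in_open_true in Hx.
      destruct x as [|n]; [lia|].
      specialize (HN n ltac:(lia)). rewrite Rminus_0_r, Rterm_id in HN by lia.
      apply Rabs_def2 in HN.
      rewrite INR_pred by lia. rewrite (S_INR (S n)).
      set (X := INR (S n)) in *. set (pp := p (S n)) in *.
      replace (1 + pp * (4 / 3 * (INR h ^ 2 - (X + 1) ^ 2)) +
        (1 - pp) * (4 / 3 * (INR h ^ 2 - (X - 1) ^ 2)) - 4 / 3 * (INR h ^ 2 - X ^ 2))
        with (1 - 4/3 * (1 + 2 * X * (2 * pp - 1))) by ring.
      lra.
    + intros x Hx HxN. apply in_open_true in Hx.
      assert (Hp := Hr x ltac:(lia)).
      rewrite INR_pred by lia. rewrite (S_INR x).
      pose proof (le_INR _ _ HxN). pose proof (pos_INR h).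
      set (X := INR x) in *. set (pp := p x) in *.
      replace (1 + pp * (4 / 3 * (INR h ^ 2 - (X + 1) ^ 2)) +
        (1 - pp) * (4 / 3 * (INR h ^ 2 - (X - 1) ^ 2)) - 4 / 3 * (INR h ^ 2 - X ^ 2))
        with (1 - 4/3 * (1 + 2 * X * (2 * pp - 1))) by ring.
      assert (0 <= X * pp) by (apply Rmult_le_pos; [apply pos_INR|lra]).
      assert (0 <= X) by apply pos_INR.
      lra.
  - assert (Hd' : 0 < delta) by lra.
    destruct (HR (mkposreal delta Hd')) as [N HN0].
    assert (HN : forall n, (N <= n)%nat -> Rabs (INR (S n) * Rterm p delta (S n) - 0) < delta)
      by (intros n Hn; exact (HN0 n Hn)).
    exists N, 0. split. lra.
    intros h. exists (fun x => INR x * (2 * INR h - INR x)).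
    split; [|split].
    + intros x Hx. pose proof (le_INR _ _ Hx). pose proof (pos_INR x). nra.
    + intros x Hx HxN. apply in_open_true in Hx.
      assert (Hxh : INR x < INR h) by (apply lt_INR; lia).
      destruct x as [|n]; [lia|].
      specialize (HN n ltac:(lia)). rewrite Rminus_0_r, Rterm_id in HN by lia.
      apply Rabs_def2 in HN.
      rewrite INR_pred by lia. rewrite (S_INR (S n)).
      assert (HX : 0 < INR (S n)) by (apply lt_0_INR; lia).
      set (X := INR (S n)) in *. set (pp := p (S n)) in *.
      replace (1 + pp * ((X + 1) * (2 * INR h - (X + 1))) +
        (1 - pp) * ((X - 1) * (2 * INR h - (X - 1))) - X * (2 * INR h - X))
        with (2 * (INR h - X) * (2 * pp - 1)) by ring.
      assert (2 * pp - 1 < 0).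
      { destruct (Rlt_dec (2 * pp - 1) 0); auto.
        assert (0 <= X * (2 * pp - 1)) by (apply Rmult_le_pos; lra). lra. }
      assert (0 <= 2 * (INR h - X) * (1 - 2 * pp)) by (apply Rmult_le_pos; lra).
      lra.
    + intros x Hx HxN. apply in_open_true in Hx.
      assert (Hp := Hr x ltac:(lia)).
      assert (Hxh : INR x < INR h) by (apply lt_INR; lia).
      rewrite INR_pred by lia. rewrite (S_INR x).
      set (X := INR x) in *. set (pp := p x) in *.
      replace (1 + pp * ((X + 1) * (2 * INR h - (X + 1))) +
        (1 - pp) * ((X - 1) * (2 * INR h - (X - 1))) - X * (2 * INR h - X))
        with (2 * (INR h - X) * (2 * pp - 1)) by ring.
      assert (0 <= 2 * (INR h - X) * (1 - pp)) by (apply Rmult_le_pos; lra).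
      assert (0 <= X) by apply pos_INR.
      lra.
Qed.

Lemma exp_le' a b : a <= b -> exp a <= exp b.
Proof. intros H. destruct (Rle_lt_or_eq_dec _ _ H). left; apply exp_increasing; auto. subst; lra. Qed.

Lemma exp_pow' a k : exp a ^ k = exp (INR k * a).
Proof.
  induction k. simpl. rewrite Rmult_0_l, exp_0; auto.
  rewrite S_INR. simpl. rewrite IHk, <- exp_plus. f_equal. ring.
Qed.

Theorem lemma4p1 (p : nat -> R) (delta : R)
  (Hdelta : -1 <= delta)
  (Hrange : forall x : nat, (1 <= x)%nat -> 0 <= p x <= 1)
  (HR : is_lim_seq (fun n : nat => INR (S n) * Rterm p delta (S n)) 0)
  (Hell : unif_elliptic p)
  (Hrec : recurrent p) :
  exists K2 : R, 0 < K2 /\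
    forall (h m q : nat), (1 <= h)%nat -> (2 * h * h <= m)%nat ->
      (0 < q)%nat -> (q < h)%nat ->
      stay p h m q <= exp (- K2 * INR m / (INR h ^ 2)).
Proof.
  destruct Hell as [eps [He Hell']].
  assert (Hp : forall x, (1 <= x)%nat -> eps <= p x) by (intros x Hx; apply Hell'; auto).
  assert (Hq : forall x, (1 <= x)%nat -> eps <= 1 - p x) by (intros x Hx; apply Hell'; auto).
  assert (He2 : eps <= 1/2) by (pose proof (Hp 1%nat ltac:(lia)); pose proof (Hq 1%nat ltac:(lia)); lra).
  destruct (g0_exists p delta Hrange HR) as [N [B0 [HB0 Hg]]].
  set (M := INR N * (2 / eps) ^ N).
  assert (HM : 0 <= M).
  { unfold M. apply Rmult_le_pos. apply pos_INR. apply pow_le.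
    unfold Rdiv; apply Rmult_le_pos; [lra|]. apply Rlt_le, Rinv_0_lt_compat; lra. }
  destruct (INR_unbounded (12 * M + 6 * B0 * M + 1)) as [hc Hhc].
  set (al := Rmin (1/6) (eps ^ hc)).
  assert (Hepc : 0 < eps ^ hc) by (apply pow_lt; lra).
  assert (Hal : 0 < al <= 1/6).
  { unfold al. split. apply Rmin_pos; lra. apply Rmin_l. }
  assert (Key : forall h x, (1 <= h)%nat -> stay p h (2*h*h) x <= 1 - al).
  { intros h x Hh.
    destruct (Rle_dec (12 * M + 6 * B0 * M + 1) (INR h)) as [Hbig|Hsmall].
    - destruct (Hg h) as [g0 [G1 [G2 G3]]].
      pose proof (large_case p Hrange h N eps B0 g0 ltac:(lra) Hq HB0 G1 G2 G3 x) as L.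
      pose proof (numeric (INR h) B0 M HM HB0 Hbig) as Nm.
      fold M in L. lra.
    - assert (Hhc' : (h < hc)%nat) by (apply INR_lt; lra).
      replace (2 * h * h)%nat with (h + (2 * h * h - h))%nat by nia.
      assert (S1 := stay_submult p Hrange h 1 (2 * h * h - h)
         (fun y => proj2 (stay_bounds p Hrange h _ y)) h x).
      assert (S2 := stay_elliptic p Hrange h eps ltac:(lra) Hp h x ltac:(lia)).
      assert (S3 := pow_decr eps (h - x) hc ltac:(lra) ltac:(lia)).
      assert (al <= eps ^ hc) by apply Rmin_r.
      lra. }
  exists (al / 4). split. lra.
  intros h m q Hh Hm Hq0 Hqh.
  set (T := (2 * h * h)%nat).
  assert (HT : (T <> 0)%nat) by (unfold T; nia).
  pose proof (Nat.div_mod m T HT) as Dm.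
  pose proof (Nat.mod_upper_bound m T HT) as Mb.
  set (k := (m / T)%nat) in *. set (r := (m mod T)%nat) in *.
  assert (Hk : (1 <= k)%nat).
  { destruct k; [|lia]. fold T in Hm. lia. }
  assert (Hmk : (m <= 2 * (T * k))%nat) by nia.
  assert (Pw : forall j y, stay p h (j * T + r) y <= (1 - al) ^ j).
  { induction j; intros y.
    - simpl. apply stay_bounds; auto.
    - replace (S j * T + r)%nat with (T + (j * T + r))%nat by (simpl; lia).
      pose proof (stay_submult p Hrange h _ _ IHj T y) as S1.
      pose proof (Key h y Hh) as K. fold T in K.
      pose proof (pow_le (1 - al) j ltac:(lra)).
      simpl. assert ((1 - al) ^ j * stay p h T y <= (1 - al) ^ j * (1 - al))
        by (apply Rmult_le_compat_l; auto). lra. }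
  assert (Sq : stay p h m q <= (1 - al) ^ k).
  { rewrite Dm at 1. rewrite Nat.mul_comm. apply Pw. }
  eapply Rle_trans; [apply Sq|].
  eapply Rle_trans. apply pow_incr. split. lra. pose proof (exp_ineq1_le (- al)). 
  replace (1 + - al) with (1 - al) in H by ring. exact H.
  rewrite exp_pow'. apply exp_le'.
  assert (HH : 0 < INR h) by (apply lt_0_INR; lia).
  apply le_INR in Hmk. rewrite !mult_INR in Hmk. unfold T in Hmk. rewrite !mult_INR in Hmk.
  simpl in Hmk.
  assert (0 < INR h ^ 2) by nra.
  assert (E : - (al / 4) * INR m / INR h ^ 2 = - (al / 4) * (INR m / INR h ^ 2)) by (unfold Rdiv; ring).
  rewrite E.
  assert (INR m / INR h ^ 2 <= 4 * INR k).
  { apply Rmult_le_reg_r with (INR h ^ 2); auto. unfold Rdiv.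
    rewrite Rmult_assoc, Rinv_l by lra. simpl in *. nra. }
  nra.
Qed.
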